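(* Let $G_1=(V,D_1)$ and $G_2=(V,D_2)$ be distinct simple directed graphs on the same node set $V$. Suppose they have the same out-degree sequence, meaning $|\mathrm{ch}_1(v)|=|\mathrm{ch}_2(v)|$ for every $v\in V$, and that at least one of them is acyclic. Then $G_1$ and $G_2$ have different Jacobian matroids.
   Context: A directed graph $G=(V,D)$ has edge set $D\subseteq V\times V$ of ordered pairs $(i,j)$, $i\neq j$. It is simple if $(i,j)$ and $(j,i)$ are never both in $D$. $\mathrm{ch}_k(v)$ is the set of children of $v$ in $G_k$. For $G=(V,D)$ let $\Lambda$ be the $V\times V$ matrix with indeterminate entries $\lambda_{ij}$ for $(i,j)\in D$ and zeros elsewhere, and $s$ a further indeterminate. Let $\psi_G(\Lambda,s)=s(I-\Lambda)(I-\Lambda)^T=K$. The transposed Jacobian $J(\psi_G)$ has rows indexed by $\{\lambda_{kl}:(k,l)\in D\}\cup\{s\}$ and columns indexed by $K_{ij}$, $i\le j$, with entries $\partial K_{ij}/\partial\theta$. The Jacobian matroid of $G$ is the matroid on the columns in which a set is independent iff its columns are linearly independent over $\mathbb{R}(\lambda,s)$. *)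

(* Defs.v *)
From HB Require Import structures.
From mathcomp Require Import all_boot all_order all_algebra fraction.
From mathcomp Require Import reals.
From mathcomp Require Import mpoly.

Set Implicit Arguments.
Unset Strict Implicit.
Unset Printing Implicit Defensive.

Import Order.TTheory GRing.Theory Num.Theory.
Local Open Scope ring_scope.

Definition no_loops n (D : {set 'I_n * 'I_n}) : Prop :=
  forall i : 'I_n, (i, i) \notin D.

Definition simple_digraph n (D : {set 'I_n * 'I_n}) : Prop :=
  no_loops D /\ forall i j : 'I_n, (i, j) \in D -> (j, i) \notin D.

Definition ch n (D : {set 'I_n * 'I_n}) (v : 'I_n) : {set 'I_n} :=
  [set j | (v, j) \in D].

Definition acyclic n (D : {set 'I_n * 'I_n}) : Prop :=
  ~ exists (x : 'I_n) (p : seq 'I_n),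
      [/\ p != [::], path (fun u v => (u, v) \in D) x p & last x p = x].

(* Indeterminates: s is variable 0, lambda_(i,j) is variable 1 + rank of (i,j).
   (Variables lambda_(i,j) with (i,j) \notin D are simply unused.) *)
Definition nvars n := #|{: 'I_n * 'I_n}|.+1.

Definition s_var n : 'I_(nvars n) := ord0.
Definition lam_var n (e : 'I_n * 'I_n) : 'I_(nvars n) := lift ord0 (enum_rank e).

Section Jacobian.
Variable R : realType.
Variable n : nat.
Local Notation P := {mpoly R[nvars n]}.
Local Notation F := {fraction P}.

Definition Lambda (D : {set 'I_n * 'I_n}) : 'M[P]_n :=
  \matrix_(i, j) (if (i, j) \in D then 'X_(lam_var (i, j)) else 0).

Definition psiK (D : {set 'I_n * 'I_n}) : 'M[P]_n :=
  'X_(s_var n) *: ((1%:M - Lambda D) *m (1%:M - Lambda D)^T).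

(* row index theta of the transposed Jacobian: s or lambda_kl with (k,l) in D *)
Definition is_param (D : {set 'I_n * 'I_n}) (theta : 'I_(nvars n)) : bool :=
  (theta == s_var n) || [exists e in D, theta == lam_var e].

Definition ground : {set 'I_n * 'I_n} := [set c : 'I_n * 'I_n | (nat_of_ord c.1 <= nat_of_ord c.2)%N].

(* entry (theta, K_ij) of J(psi_G), viewed in R(lambda, s) *)
Definition jac (D : {set 'I_n * 'I_n}) (theta : 'I_(nvars n)) (c : 'I_n * 'I_n) : F :=
  FracField.tofrac (mderiv theta (psiK D c.1 c.2)).

Definition jac_indep (D : {set 'I_n * 'I_n}) (S : {set 'I_n * 'I_n}) : Prop :=
  S \subset ground /\
  forall a : 'I_n * 'I_n -> F,
    (forall theta, is_param D theta -> \sum_(c in S) a c * jac D theta c = 0) ->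
    forall c, c \in S -> a c = 0.

Definition jacobian_matroid (D : {set 'I_n * 'I_n}) : {set 'I_n * 'I_n} -> Prop :=
  jac_indep D.

End Jacobian.

(* Main.v *)
Require Import Defs.
From HB Require Import structures.
From mathcomp Require Import all_boot all_order all_algebra fraction.
From mathcomp Require Import reals.
From mathcomp Require Import mpoly.
From mathcomp Require Import ring.
Set Implicit Arguments. Unset Strict Implicit. Unset Printing Implicit Defensive.
Import Order.TTheory GRing.Theory Num.Theory.
Local Open Scope ring_scope.



Lemma mderivXE (R : realType) k (i j : 'I_k) :
  mderiv i ('X_j : {mpoly R[k]}) = (i == j)%:R.
Proof.
rewrite mderivX mnm1E eq_sym; case: eqP => [->|_]; last by rewrite scale0r.
have -> : forall m : 'X_{1..k}, (m - m)%MM = 0%MM by move=> m; apply/mnmP => l; rewrite mnmBE subnn mnm0E.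
by rewrite mpolyX0 scale1r.
Qed.

Definition Lm (R : realType) n (D : {set 'I_n * 'I_n}) (p k : 'I_n) : {mpoly R[nvars n]} :=
  (p == k)%:R - Lambda R D p k.

Lemma psiKE (R : realType) n (D : {set 'I_n * 'I_n}) p q :
  psiK R D p q = 'X_(s_var n) * \sum_k Lm R D p k * Lm R D q k.
Proof.
rewrite /psiK !mxE; congr (_ * _); apply: eq_bigr => k _.
by rewrite /Lm /Lambda ?mxE.
Qed.

Lemma dLam (R : realType) n (D : {set 'I_n * 'I_n}) th p k :
  mderiv th (Lambda R D p k) =
  if (p, k) \in D then (th == lam_var (p, k))%:R else 0.
Proof.
rewrite /Lambda mxE; case: ifP => _; first exact: mderivXE.
exact: mderiv0.
Qed.

Lemma dLm (R : realType) n (D : {set 'I_n * 'I_n}) th p k :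
  mderiv th (Lm R D p k) =
  if (p, k) \in D then - (th == lam_var (p, k))%:R else 0.
Proof.
rewrite /Lm mderivB dLam -mpolyC_nat mderivC sub0r.
by case: ifP => _; rewrite ?oppr0.
Qed.

Definition xs (R : realType) n : {fraction {mpoly R[nvars n]}} := tofrac 'X_(s_var n).
Definition LF (R : realType) n (D : {set 'I_n * 'I_n}) p k : {fraction {mpoly R[nvars n]}} :=
  tofrac (Lm R D p k).
Definition dL (R : realType) n (D : {set 'I_n * 'I_n}) (th : 'I_(nvars n)) (p k : 'I_n) :
   {fraction {mpoly R[nvars n]}} :=
  if (p, k) \in D then - (th == lam_var (p, k))%:R else 0.
Definition gF (R : realType) n (D : {set 'I_n * 'I_n}) p q : {fraction {mpoly R[nvars n]}} :=
  tofrac (\sum_k Lm R D p k * Lm R D q k).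

Lemma jacE (R : realType) n (D : {set 'I_n * 'I_n}) th p q :
  jac R D th (p, q) = (th == s_var n)%:R * gF R D p q +
     xs R n * \sum_k (dL R D th p k * LF R D q k + LF R D p k * dL R D th q k).
Proof.
rewrite /jac /= psiKE mderivM mderivXE raddf_sum /= rmorphD !rmorphM /= rmorph_nat.
congr (_ + _); congr (_ * _); rewrite rmorph_sum; apply: eq_bigr => k _.
rewrite mderivM rmorphD !rmorphM /= !dLm /dL /LF.
by case: ifP; case: ifP => _ _; rewrite ?rmorphN ?rmorph_nat ?rmorph0.
Qed.

Lemma lam_var_inj n : injective (@lam_var n).
Proof. by move=> e e' /lift_inj /enum_rank_inj. Qed.

Lemma lam_var_eq n (e e' : 'I_n * 'I_n) : (lam_var e == lam_var e') = (e == e').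
Proof. by apply/eqP/eqP => [/lam_var_inj|->]. Qed.

Lemma s_lam_neq n (e : 'I_n * 'I_n) : (lam_var e == s_var n) = false.
Proof. by apply/negbTE; rewrite /lam_var /s_var eq_sym; apply: neq_lift. Qed.

Lemma xs_neq0 (R : realType) n : xs R n != 0.
Proof.
rewrite /xs tofrac_eq0; apply/negP => /eqP H.
have := @mcoeffXU (nvars n) R (s_var n) (s_var n); rewrite H mcoeff0 eqxx.
by move/eqP; rewrite eq_sym oner_eq0.
Qed.

Lemma LF_neq0 (R : realType) n (D : {set 'I_n * 'I_n}) a b :
  LF R D a b != 0 -> (a == b) || ((a, b) \in D).
Proof.
apply: contraNT; rewrite negb_or => /andP[/negbTE ab /negbTE abD].
by rewrite /LF /Lm /Lambda mxE ab abD /= mulr0n subr0 rmorph0.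
Qed.

Lemma LF_diag (R : realType) n (D : {set 'I_n * 'I_n}) a :
  no_loops D -> LF R D a a = 1.
Proof. by move=> nl; rewrite /LF /Lm /Lambda mxE (negbTE (nl a)) eqxx subr0 rmorph1. Qed.

Lemma LF_off (R : realType) n (D : {set 'I_n * 'I_n}) a b :
  a != b -> (a, b) \notin D -> LF R D a b = 0.
Proof. by move=> /negbTE ab /negbTE abD; rewrite /LF /Lm /Lambda mxE ab abD /= mulr0n subr0 rmorph0. Qed.

Lemma jac_sym (R : realType) n (D : {set 'I_n * 'I_n}) th p q :
  jac R D th (q, p) = jac R D th (p, q).
Proof.
rewrite /jac /= !psiKE; congr (tofrac (mderiv _ (_ * _))).
by apply: eq_bigr => k _; rewrite mulrC.
Qed.

Definition colidx n (p q : 'I_n) : 'I_n * 'I_n := if (p <= q)%N then (p, q) else (q, p).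

Lemma jac_colidx (R : realType) n (D : {set 'I_n * 'I_n}) th p q :
  jac R D th (colidx p q) = jac R D th (p, q).
Proof. by rewrite /colidx; case: ifP => _ //; rewrite jac_sym. Qed.

Lemma colidx_ground n (p q : 'I_n) : colidx p q \in ground n.
Proof.
rewrite /colidx /ground inE; case: ifP => //= /negbT; rewrite -ltnNge.
exact: ltnW.
Qed.

Lemma colidx_eq n (p q a b : 'I_n) : colidx p q = colidx a b ->
  ((p == a) && (q == b)) || ((p == b) && (q == a)).
Proof.
by rewrite /colidx; do 2 case: ifP => _; case=> -> ->; rewrite !eqxx ?orbT.
Qed.

Lemma jac_sink (R : realType) n (D : {set 'I_n * 'I_n}) th z :
  (forall k, (z, k) \notin D) -> jac R D th (z, z) = (th == s_var n)%:R.
Proof.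
move=> hz; rewrite jacE big1 ?mulr0 ?addr0; last first.
  by move=> k _; rewrite /dL (negbTE (hz k)) !(mul0r, mulr0) addr0.
rewrite /gF (bigD1 z) //= big1 ?addr0.
  by rewrite /Lm /Lambda mxE (negbTE (hz z)) eqxx subr0 mulr1 rmorph1 mulr1.
move=> k /negbTE kz; rewrite /Lm /Lambda mxE (negbTE (hz k)).
by rewrite eq_sym kz /= mulr0n subr0 mulr0.
Qed.

Lemma jac_lam0 (R : realType) n (D : {set 'I_n * 'I_n}) p0 q0 p q :
  ~~ (((p == p0) && ((q == q0) || ((q, q0) \in D))) ||
      ((q == p0) && ((p == q0) || ((p, q0) \in D)))) ->
  jac R D (lam_var (p0, q0)) (p, q) = 0.
Proof.
move=> Hc; rewrite jacE s_lam_neq mul0r add0r big1 ?mulr0 // => k _.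
have T1 : dL R D (lam_var (p0, q0)) p k * LF R D q k = 0.
  rewrite /dL; case: ifP => pkD; last by rewrite mul0r.
  rewrite lam_var_eq; case: eqP => [[ep ek]|_]; last by rewrite oppr0 mul0r.
  apply/eqP; rewrite mulf_eq0; apply/orP; right; apply: contraNT Hc.
  by move/LF_neq0; rewrite ep ek eqxx => ->.
have T2 : LF R D p k * dL R D (lam_var (p0, q0)) q k = 0.
  rewrite /dL; case: ifP => qkD; last by rewrite mulr0.
  rewrite lam_var_eq; case: eqP => [[ep ek]|_]; last by rewrite oppr0 mulr0.
  apply/eqP; rewrite mulf_eq0; apply/orP; left; apply: contraNT Hc.
  by move/LF_neq0; rewrite ep ek eqxx => ->; rewrite orbT.
by rewrite T1 T2 addr0.
Qed.

Lemma jac_lam_self (R : realType) n (D : {set 'I_n * 'I_n}) p q :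
  simple_digraph D -> (p, q) \in D -> jac R D (lam_var (p, q)) (p, q) = - xs R n.
Proof.
move=> [nl sD] pqD.
have pq : p != q by apply/eqP => epq; move: pqD; rewrite epq (negbTE (nl q)).
rewrite jacE s_lam_neq mul0r add0r (bigD1 q) //= big1 ?addr0.
  rewrite /dL pqD eqxx (negbTE (nl q)) mulr0 addr0 LF_diag //.
  by rewrite mulr1 mulrN mulr1.
move=> k kq; have kq' : (q == k) = false by rewrite eq_sym (negbTE kq).
have qp' : (q == p) = false by rewrite eq_sym (negbTE pq).
rewrite /dL !lam_var_eq !xpair_eqE ?kq' ?qp' ?(negbTE kq) ?(negbTE pq) /= ?andbF ?andFb.
by case: ifP => _; case: ifP => _; rewrite ?oppr0 ?(mulr0, mul0r, addr0).
Qed.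

Definition inspan (R : realType) n (D S : {set 'I_n * 'I_n})
  (v : 'I_(nvars n) -> {fraction {mpoly R[nvars n]}}) : Prop :=
  exists a : 'I_n * 'I_n -> {fraction {mpoly R[nvars n]}},
    forall th, v th = \sum_(c in S) a c * jac R D th c.
Arguments inspan R {n} D S v.

Lemma inspan_ext (R : realType) n (D S : {set 'I_n * 'I_n}) u v :
  (forall th, u th = v th) -> inspan R D S u -> inspan R D S v.
Proof. by move=> E [a Ha]; exists a => th; rewrite -E. Qed.

Lemma inspan_col (R : realType) n (D S : {set 'I_n * 'I_n}) c :
  c \in S -> inspan R D S (fun th => jac R D th c).
Proof.
move=> cS; exists (fun c' => (c' == c)%:R) => th.
rewrite (bigD1 c) //= eqxx mul1r big1 ?addr0 // => c' /andP[_ /negbTE ->].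
by rewrite mul0r.
Qed.

Lemma inspan0 (R : realType) n (D S : {set 'I_n * 'I_n}) :
  inspan R D S (fun _ => 0).
Proof. by exists (fun _ => 0) => th; rewrite big1 // => c _; rewrite mul0r. Qed.

Lemma inspanD (R : realType) n (D S : {set 'I_n * 'I_n}) u v :
  inspan R D S u -> inspan R D S v -> inspan R D S (fun th => u th + v th).
Proof.
move=> [a Ha] [b Hb]; exists (fun c => a c + b c) => th.
by rewrite Ha Hb -big_split; apply: eq_bigr => c _; rewrite mulrDl.
Qed.

Lemma inspanZ (R : realType) n (D S : {set 'I_n * 'I_n}) k u :
  inspan R D S u -> inspan R D S (fun th => k * u th).
Proof.
move=> [a Ha]; exists (fun c => k * a c) => th.
by rewrite Ha mulr_sumr; apply: eq_bigr => c _; rewrite mulrA.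
Qed.

Lemma inspanZr (R : realType) n (D S : {set 'I_n * 'I_n}) k u :
  inspan R D S u -> inspan R D S (fun th => u th * k).
Proof. by move=> H; apply: inspan_ext (inspanZ k H) => th; rewrite mulrC. Qed.

Lemma inspanN (R : realType) n (D S : {set 'I_n * 'I_n}) u :
  inspan R D S u -> inspan R D S (fun th => - u th).
Proof. by move=> H; apply: inspan_ext (inspanZ (-1) H) => th; rewrite mulN1r. Qed.

Lemma inspan_sum (R : realType) n (D S : {set 'I_n * 'I_n}) (P : pred 'I_n) f :
  (forall k, P k -> inspan R D S (f k)) ->
  inspan R D S (fun th => \sum_(k | P k) f k th).
Proof.
move=> H.
have: forall k, exists a : 'I_n * 'I_n -> {fraction {mpoly R[nvars n]}},
    P k -> forall th, f k th = \sum_(c in S) a c * jac R D th c.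
  move=> k; case: (boolP (P k)) => Pk; last by exists (fun _ => 0).
  by have [a Ha] := H k Pk; exists a.
case/fin_all_exists => A HA.
exists (fun c => \sum_(k | P k) A k c) => th.
rewrite (eq_bigr (fun k => \sum_(c in S) A k c * jac R D th c)); last first.
  by move=> k Pk; rewrite (HA k Pk).
rewrite exchange_big /=; apply: eq_bigr => c _; by rewrite mulr_suml.
Qed.

Arguments inspan_col {R n D S c}.
Arguments inspan0 {R n D S}.
Arguments inspanN {R n D S u}.
Arguments inspanZr {R n D S} k {u}.

Definition ev (R : realType) n (e : 'I_n * 'I_n) : 'I_(nvars n) -> {fraction {mpoly R[nvars n]}} :=
  fun th => (th == lam_var e)%:R.

Definition Iset n (D : {set 'I_n * 'I_n}) (B : {set 'I_n}) (z : 'I_n) : {set 'I_n * 'I_n} :=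
  (z, z) |: [set colidx e.1 e.2 | e in [set e in D | e.2 \in B]].

Lemma inspan_dL (R : realType) n (D S : {set 'I_n * 'I_n}) a k c :
  ((a, k) \in D -> inspan R D S (ev R (a, k))) ->
  inspan R D S (fun th => dL R D th a k * c) /\ inspan R D S (fun th => c * dL R D th a k).
Proof.
case: (boolP ((a, k) \in D)) => akD H.
  have H' := inspanN (H isT).
  split; [apply: inspan_ext (inspanZr c H') | apply: inspan_ext (inspanZ c H')].
    by move=> th; rewrite /dL akD.
  by move=> th; rewrite /dL akD.
by split; apply: inspan_ext (inspan0) => th; rewrite /dL (negbTE akD) ?mul0r ?mulr0.
Qed.

Lemma Iset_col n (D : {set 'I_n * 'I_n}) (B : {set 'I_n}) (z p q : 'I_n) :
  (p, q) \in D -> q \in B -> colidx p q \in Iset D B z.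
Proof.
move=> pqD qB; rewrite /Iset in_setU1; apply/orP; right.
by apply/imsetP; exists (p, q) => //; rewrite inE pqD qB.
Qed.

Lemma Iset_z n (D : {set 'I_n * 'I_n}) (B : {set 'I_n}) (z : 'I_n) : (z, z) \in Iset D B z.
Proof. by rewrite /Iset in_setU1 eqxx. Qed.

Lemma span_edges (R : realType) n (D : {set 'I_n * 'I_n}) (B : {set 'I_n}) (z : 'I_n) (rk : 'I_n -> nat) :
  simple_digraph D ->
  (forall q m, q \in B -> (q, m) \in D -> (m \in B) && (rk m < rk q)%N) ->
  (forall k, (z, k) \notin D) ->
  forall p q, (p, q) \in D -> q \in B -> inspan R D (Iset D B z) (ev R (p, q)).
Proof.
move=> [nl sD] hB hz.
have es : inspan R D (Iset D B z) (fun th => (th == s_var n)%:R).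
  by apply: inspan_ext (inspan_col (Iset_z D B z)) => th; rewrite jac_sink.
suff: forall N p q, (rk q < N)%N -> (p, q) \in D -> q \in B ->
    inspan R D (Iset D B z) (ev R (p, q)).
  by move=> H p q; apply: (H (rk q).+1).
elim=> [//|N IH] p q ltq pqD qB.
have terms : forall k, k != q -> inspan R D (Iset D B z)
    (fun th => dL R D th p k * LF R D q k + LF R D p k * dL R D th q k).
  move=> k kq; apply: inspanD.
    case: (boolP ((q, k) \in D)) => qkD.
      have /andP[kB ltk] := hB q k qB qkD.
      apply: (proj1 (inspan_dL _ _)) => pkD; apply: IH => //.
      by apply: leq_trans ltk _; rewrite -ltnS.
    rewrite LF_off 1?eq_sym //.
    by apply: inspan_ext (inspan0) => th; rewrite mulr0.
  apply: (proj2 (inspan_dL _ _)) => qkD.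
  have /andP[kB ltk] := hB q k qB qkD.
  by apply: IH => //; apply: leq_trans ltk _; rewrite -ltnS.
have key : inspan R D (Iset D B z) (fun th => xs R n * ev R (p, q) th).
  have H := inspanD (inspanD (inspanZr (gF R D p q) es)
     (inspanZ (xs R n) (inspan_sum terms)))
     (inspanN (inspan_col (Iset_col z pqD qB))).
  apply: inspan_ext H => th /=.
  rewrite jac_colidx jacE.
  set t := (fun k => dL R D th p k * LF R D q k + LF R D p k * dL R D th q k).
  have -> : \sum_k t k = t q + \sum_(k | k != q) t k by rewrite (bigD1 q).
  have -> : t q = - ev R (p, q) th.
    by rewrite /t /dL pqD (negbTE (nl q)) mulr0 addr0 LF_diag // mulr1.
  set A := (_ * gF R D p q); set S := \sum_(k | k != q) t k.
  ring.
apply: inspan_ext (inspanZ (xs R n)^-1 key) => th.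
by rewrite mulrA mulVf ?mul1r // xs_neq0.
Qed.

Lemma ciw_notin n (D : {set 'I_n * 'I_n}) (B : {set 'I_n}) (z i w : 'I_n) :
  i \notin B -> w \notin B -> i != w -> colidx i w \notin Iset D B z.
Proof.
move=> iB wB iw; rewrite /Iset in_setU1 negb_or; apply/andP; split.
  apply/eqP => E.
  have : colidx i w = colidx z z by rewrite E /colidx leqnn.
  by move/colidx_eq; rewrite orbb => /andP[/eqP E1 /eqP E2]; move: iw; rewrite E1 E2 eqxx.
apply/imsetP => -[e]; rewrite inE => /andP[_ eB] /colidx_eq.
case/orP => /andP[/eqP E1 /eqP E2].
  by move: wB; rewrite E2 eB.
by move: iB; rewrite E1 eB.
Qed.

Lemma dep_lemma (R : realType) n (D : {set 'I_n * 'I_n}) (B : {set 'I_n}) (z : 'I_n)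
    (rk : 'I_n -> nat) (i w : 'I_n) :
  simple_digraph D ->
  (forall q m, q \in B -> (q, m) \in D -> (m \in B) && (rk m < rk q)%N) ->
  (forall k, (z, k) \notin D) ->
  (forall k, (w, k) \in D -> k \in B) ->
  i \notin B -> w \notin B -> i != w -> (i, w) \notin D ->
  ~ jac_indep R D (colidx i w |: Iset D B z).
Proof.
move=> sD hB hz hw iB wB iw iwD.
have es : inspan R D (Iset D B z) (fun th => (th == s_var n)%:R).
  by apply: inspan_ext (inspan_col (Iset_z D B z)) => th; rewrite jac_sink.
have terms : forall k, inspan R D (Iset D B z)
    (fun th => dL R D th i k * LF R D w k + LF R D i k * dL R D th w k).
  move=> k; apply: inspanD.
    case: (boolP ((w, k) \in D)) => wkD.
      apply: (proj1 (inspan_dL _ _)) => ikD.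
      exact: (span_edges R sD hB hz ikD (hw k wkD)).
    case: (eqVneq k w) => [->|kw].
      apply: inspan_ext inspan0 => th; by rewrite /dL (negbTE iwD) mul0r.
    rewrite LF_off 1?eq_sym //.
    by apply: inspan_ext inspan0 => th; rewrite mulr0.
  apply: (proj2 (inspan_dL _ _)) => wkD.
  exact: (span_edges R sD hB hz wkD (hw k wkD)).
have [a Ha] : inspan R D (Iset D B z) (fun th => jac R D th (i, w)).
  have H := inspanD (inspanZr (gF R D i w) es)
     (inspanZ (xs R n) (inspan_sum (P := xpredT) (fun k _ => terms k))).
  by apply: inspan_ext H => th /=; rewrite jacE.
have nI := ciw_notin D z iB wB iw.
case=> _ H.
have := H (fun c => if c == colidx i w then -1 else a c).
move=> H'.
suff: (if colidx i w == colidx i w then -1 else a (colidx i w)) = 0.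
  by rewrite eqxx => /eqP; rewrite oppr_eq0 oner_eq0.
apply: H' (setU11 _ _) => th _; rewrite big_setU1 //= eqxx jac_colidx Ha mulN1r.
rewrite [X in _ + X](eq_bigr (fun c => a c * jac R D th c)) ?addNr // => c cI.
by case: eqP => // E; move: nI; rewrite -E cI.
Qed.

Lemma param_lam n (D : {set 'I_n * 'I_n}) e : e \in D -> is_param D (lam_var e).
Proof. by move=> eD; rewrite /is_param; apply/orP; right; apply/existsP; exists e; rewrite eD eqxx. Qed.

Lemma param_s n (D : {set 'I_n * 'I_n}) : is_param D (s_var n).
Proof. by rewrite /is_param eqxx. Qed.

Lemma ind_lemma (R : realType) n (D : {set 'I_n * 'I_n}) (B : {set 'I_n}) (z : 'I_n)
    (rk : 'I_n -> nat) (i w : 'I_n) :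
  simple_digraph D ->
  (forall q m, q \in B -> (q, m) \in D -> (m \in B) && (rk m < rk q)%N) ->
  (forall k, (z, k) \notin D) ->
  i \notin B -> w \notin B -> i != w -> (i, w) \in D ->
  jac_indep R D (colidx i w |: Iset D B z).
Proof.
move=> sD hB hz iB wB iw iwD.
have nI := ciw_notin D z iB wB iw.
have sD' := sD; case: sD' => nl sDD.
split.
  apply/subsetP => c; rewrite in_setU1 /Iset in_setU1.
  case/orP => [/eqP ->|/orP[/eqP ->|/imsetP[e _ ->]]]; rewrite ?colidx_ground //.
  by rewrite /ground inE leqnn.
move=> a H.
have xs0 := xs_neq0 R n.
have Hiw : a (colidx i w) = 0.
  have := H (lam_var (i, w)) (param_lam iwD).
  rewrite big_setU1 //= jac_colidx jac_lam_self // big1 ?addr0.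
    by move/eqP; rewrite mulrN oppr_eq0 mulf_eq0 (negbTE xs0) orbF => /eqP.
  move=> c; rewrite /Iset in_setU1 => /orP[/eqP ->|/imsetP[e]].
    rewrite jac_lam0 ?mulr0 //.
    have -> : (z, w) \in D = false by apply/negbTE.
    by case: eqP => // ->; rewrite (negbTE iw).
  rewrite inE => /andP[eD eB] ->; rewrite jac_colidx.
  case: e eD eB => p q /= eD eB.
  rewrite jac_lam0 ?mulr0 //.
  have -> : (q == w) = false by apply: contraNF wB => /eqP <-.
  have -> : (q == i) = false by apply: contraNF iB => /eqP <-.
  have -> : (q, w) \in D = false.
    by apply: contraNF wB => qwD; have /andP[] := hB q w eB qwD.
  by rewrite andbF.
pose Mx := (\max_(v : 'I_n) rk v).+1.
have rkMx : forall v, (rk v < Mx)%N by move=> v; rewrite ltnS (leq_bigmax v).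
have Hedge : forall d p q, (p, q) \in D -> q \in B -> (Mx <= rk q + d)%N ->
    a (colidx p q) = 0.
  elim=> [|d IH] p q pqD qB hle.
    by rewrite addn0 in hle; move: (rkMx q); rewrite ltnNge hle.
  have zp : (z == p) = false by apply/negbTE; apply: contraNneq (hz q) => ->.
  have := H (lam_var (p, q)) (param_lam pqD).
  have cS : colidx p q \in colidx i w |: Iset D B z.
    by rewrite in_setU1 Iset_col ?orbT.
  rewrite (bigD1 (colidx p q)) //= jac_colidx jac_lam_self // big1 ?addr0.
    by move/eqP; rewrite mulrN oppr_eq0 mulf_eq0 (negbTE xs0) orbF => /eqP.
  move=> c /andP[]; rewrite in_setU1 => /orP[/eqP -> _|]; first by rewrite Hiw mul0r.
  rewrite /Iset in_setU1 => /orP[/eqP -> _|/imsetP[e]].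
    by rewrite jac_lam0 ?mulr0 // zp.
  rewrite inE => /andP[eD eB] -> cne.
  case: e eD eB cne => p' q' /= eD eB cne.
  case: (ltnP (rk q) (rk q')) => hrk.
    by rewrite (IH p' q') ?mul0r // (leq_trans hle) // addnS ltn_add2r.
  rewrite jac_colidx jac_lam0 ?mulr0 //; rewrite negb_or; apply/andP; split.
    case: eqP => [ep|] //=; rewrite negb_or; apply/andP; split.
      by apply: contraNneq cne => eq; rewrite ep eq.
    by apply/negP => qqD; have /andP[_] := hB q' q eB qqD; rewrite ltnNge hrk.
  case: eqP => [ep|] //=; rewrite negb_or; apply/andP; split.
    apply/negP => /eqP eq; move: eD; rewrite ep eq.
    by move/(sDD _ _); rewrite pqD.
  apply/negP => pqD'; rewrite ep in eB.
  by have /andP[_] := hB p q eB pqD; rewrite ltnNge -ep hrk.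
have Hz : a (z, z) = 0.
  have := H (s_var n) (param_s D).
  rewrite (bigD1 (z, z)) /=; last by rewrite in_setU1 Iset_z orbT.
  rewrite jac_sink // eqxx mulr1 big1 ?addr0 // => c /andP[].
  rewrite in_setU1 => /orP[/eqP -> _|]; first by rewrite Hiw mul0r.
  rewrite /Iset in_setU1 => /orP[/eqP -> |/imsetP[e]]; first by rewrite eqxx.
  rewrite inE => /andP[eD eB] -> _.
  by rewrite (Hedge Mx e.1 e.2) ?mul0r //= ?leq_addl // -surjective_pairing.
move=> c; rewrite in_setU1 => /orP[/eqP -> //|].
rewrite /Iset in_setU1 => /orP[/eqP -> //|/imsetP[e]].
rewrite inE => /andP[eD eB] ->.
by rewrite (Hedge Mx e.1 e.2) //= ?leq_addl // -surjective_pairing.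
Qed.


Definition desc n (D : {set 'I_n * 'I_n}) (w : 'I_n) : {set 'I_n} :=
  [set b | [exists c, ((w, c) \in D) && connect (fun u v => (u, v) \in D) c b]].

Lemma desc_irr n (D : {set 'I_n * 'I_n}) w : acyclic D -> w \notin desc D w.
Proof.
move=> ac; rewrite inE; apply/existsP => -[c /andP[wc /connectP[p pth lst]]].
apply: ac; exists w, (c :: p); split => //=.
by rewrite wc pth.
Qed.

Lemma desc_trans n (D : {set 'I_n * 'I_n}) w b b' :
  b \in desc D w -> b' \in desc D b -> b' \in desc D w.
Proof.
rewrite !inE => /existsP[c /andP[wc cb]] /existsP[c' /andP[bc' c'b']].
apply/existsP; exists c; rewrite wc /=.
apply: connect_trans cb _; apply: connect_trans c'b'.
exact: connect1.
Qed.

Lemma desc_child n (D : {set 'I_n * 'I_n}) q m : (q, m) \in D -> m \in desc D q.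
Proof. by move=> qm; rewrite inE; apply/existsP; exists m; rewrite qm connect0. Qed.

Lemma desc_rk n (D : {set 'I_n * 'I_n}) w b : acyclic D ->
  b \in desc D w -> (#|desc D b| < #|desc D w|)%N.
Proof.
move=> ac bw; apply: proper_card; rewrite properE; apply/andP; split.
  by apply/subsetP => b'; apply: desc_trans.
by apply/subsetPn; exists b => //; apply: desc_irr.
Qed.

Lemma main_acyclic (R : realType) n (D1 D2 : {set 'I_n * 'I_n}) :
  simple_digraph D1 -> simple_digraph D2 -> D1 != D2 ->
  (forall v : 'I_n, #|ch D1 v| = #|ch D2 v|) -> acyclic D1 ->
  jacobian_matroid R D1 <> jacobian_matroid R D2.
Proof.
move=> sD1 sD2 neq hch ac Heq.
have [nl1 _] := sD1; have [nl2 _] := sD2.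
pose rk v := #|desc D1 v|.
pose W := [set w | [exists p, ((p, w) \in D1) != ((p, w) \in D2)]].
have [w0 w0W] : exists w, w \in W.
  case: (pickP (fun e => (e \in D1) != (e \in D2))) => [e He|H0].
    by exists e.2; rewrite inE; apply/existsP; exists e.1; rewrite -surjective_pairing.
  suff E : D1 = D2 by move: neq; rewrite E eqxx.
  by apply/setP => e; apply/eqP; apply/negbFE; exact: H0 e.
have [w [wW wmin]] : exists w, w \in W /\ forall b, b \in desc D1 w -> b \notin W.
  suff: forall N v, (rk v < N)%N -> v \in W ->
      exists w, w \in W /\ forall b, b \in desc D1 w -> b \notin W.
    by move=> H; apply: (H (rk w0).+1 w0).
  elim=> [//|N IH] v ltv vW.
  case: (boolP [exists b in desc D1 v, b \in W]).
    case/existsP => b /andP[bv bW]; apply: (IH b) => //.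
    by apply: leq_trans (desc_rk ac bv) _; rewrite -ltnS.
  move/existsPn => H; exists v; split => // b bv.
  by have := H b; rewrite bv.
pose B := desc D1 w.
have wB : w \notin B := desc_irr w ac.
have agree : forall q, q \in B -> forall p, ((p, q) \in D1) = ((p, q) \in D2).
  move=> q qB p; have := wmin q qB; rewrite inE => /existsPn /(_ p).
  by move/negbNE/eqP.
have subB : forall q m, (q == w) || (q \in B) -> (q, m) \in D1 -> m \in B.
  move=> q m /orP[/eqP ->|qB] qm; first exact: desc_child.
  exact: desc_trans qB (desc_child qm).
have chE : forall q, (q == w) || (q \in B) -> forall m, ((q, m) \in D1) = ((q, m) \in D2).
  move=> q hq.
  have sub : ch D1 q \subset ch D2 q.
    apply/subsetP => m; rewrite !inE => qm.
    by rewrite -agree // (subB q m hq qm).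
  have /eqP E : ch D1 q == ch D2 q by rewrite eqEcard sub hch leqnn.
  by move=> m; move/setP: E => /(_ m); rewrite !inE.
have hB1 : forall q m, q \in B -> (q, m) \in D1 -> (m \in B) && (rk m < rk q)%N.
  move=> q m qB qm; rewrite (subB q m _ qm) ?qB ?orbT //=.
  exact: desc_rk ac (desc_child qm).
have hB2 : forall q m, q \in B -> (q, m) \in D2 -> (m \in B) && (rk m < rk q)%N.
  by move=> q m qB; rewrite -chE ?qB ?orbT //; apply: hB1.
have hw1 : forall k, (w, k) \in D1 -> k \in B by move=> k; apply: subB; rewrite eqxx.
have hw2 : forall k, (w, k) \in D2 -> k \in B.
  by move=> k; rewrite -chE ?eqxx //; apply: hw1.
have [z hz1] : exists z, forall k, (z, k) \notin D1.
  suff: forall N v, (rk v < N)%N -> exists z, forall k, (z, k) \notin D1.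
    by move=> H; apply: (H (rk w).+1 w).
  elim=> [//|N IH] v ltv.
  case: (boolP [exists k, (v, k) \in D1]).
    case/existsP => k vk; apply: (IH k).
    by apply: leq_trans (desc_rk ac (desc_child vk)) _; rewrite -ltnS.
  by move/existsPn => H; exists v.
have hz2 : forall k, (z, k) \notin D2.
  have : #|ch D2 z| == 0%N.
    rewrite -hch cards_eq0; apply/eqP/setP => k; rewrite !inE.
    by apply/negbTE.
  by rewrite cards_eq0 => /eqP E k; move/setP: E => /(_ k); rewrite !inE => ->.
move: wW; rewrite inE => /existsP[i hi].
have iw : i != w.
  by apply: contraNneq hi => ->; rewrite (negbTE (nl1 w)) (negbTE (nl2 w)).
have iB : i \notin B.
  by apply: contraNN hi => iB; rewrite chE ?iB ?orbT.
have IE : Iset D1 B z = Iset D2 B z.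
  have ES : [set e in D1 | e.2 \in B] = [set e in D2 | e.2 \in B].
    apply/setP => -[p q].
    rewrite [_ \in [set _ in D1 | _]]inE [_ \in [set _ in D2 | _]]inE /=.
    by case qB: (q \in B); rewrite ?andbF ?andbT // agree.
  by rewrite /Iset ES.
case iwD1 : ((i, w) \in D1) in hi.
  have iwD2 : (i, w) \notin D2 by move: hi; case: ((i,w) \in D2).
  have := ind_lemma R sD1 hB1 hz1 iB wB iw iwD1.
  rewrite /jacobian_matroid in Heq; rewrite Heq IE.
  exact: dep_lemma sD2 hB2 hz2 hw2 iB wB iw iwD2.
have iwD2 : (i, w) \in D2 by move: hi; case: ((i,w) \in D2).
have iwD1' : (i, w) \notin D1 by rewrite iwD1.
have := ind_lemma R sD2 hB2 hz2 iB wB iw iwD2.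
rewrite /jacobian_matroid in Heq; rewrite -Heq -IE.
exact: dep_lemma sD1 hB1 hz1 hw1 iB wB iw iwD1'.
Qed.

Theorem corollary4p14 (R : realType) (n : nat) (D1 D2 : {set 'I_n * 'I_n}) :
  simple_digraph D1 -> simple_digraph D2 ->
  D1 != D2 ->
  (forall v : 'I_n, #|ch D1 v| = #|ch D2 v|) ->
  acyclic D1 \/ acyclic D2 ->
  jacobian_matroid R D1 <> jacobian_matroid R D2.
Proof.
move=> s1 s2 neq hch [ac|ac]; first exact: main_acyclic.
move=> E; apply: (main_acyclic (R := R) s2 s1 _ _ ac (esym E)).
  by rewrite eq_sym.
by move=> v; rewrite hch.
Qed.
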